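(* Let $(F,+,\cdot)$ be a (left) near-field, $I$ an index set, and $\boldsymbol\sigma=(\sigma_i)_{i\in I}$, $\boldsymbol\rho=(\rho_i)_{i\in I}$ families of multiplicative automorphisms of $F$. Let $F^{\boldsymbol\sigma,\boldsymbol\rho}$ be the set of finitely supported families $(\alpha_i)_{i\in I}\in F^I$, with addition $(\alpha_i)_i+_{\boldsymbol\sigma}(\beta_i)_i=(\alpha_i+_{\sigma_i}\beta_i)_i$ and scalar multiplication $\alpha\cdot_{\boldsymbol\rho}(\alpha_i)_i=(\rho_i(\alpha)\alpha_i)_i$. Then $F^{\boldsymbol\sigma,\boldsymbol\rho}$ is a near-vector space over $F$, and for $\mathbf e_j=(\delta_{j,i})_{i\in I}$, every $j\in I$ and every $\gamma\in F\setminus\{0\}$, the element $\gamma\cdot_{\boldsymbol\rho}\mathbf e_j$ lies in the quasi-kernel and $$+_{\gamma\cdot_{\boldsymbol\rho}\mathbf e_j}=+_{\sigma_j\circ\rho_j\circ\varphi_\gamma}.$$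
   Context: A (left) near-field is $(F,+,\cdot,0,1)$ where $(F,\cdot,1)$ is a monoid, $(F\setminus\{0\},\cdot)$ is a group, $(F,+,0)$ is an abelian group, and $\alpha(\beta+\gamma)=\alpha\beta+\alpha\gamma$. A multiplicative automorphism is a monoid automorphism of $(F,\cdot)$. For a multiplicative automorphism $\tau$, $\alpha+_\tau\beta=\tau^{-1}(\tau(\alpha)+\tau(\beta))$. For $\gamma\neq0$, $\varphi_\gamma(\alpha)=\gamma^{-1}\alpha\gamma$. $\delta_{j,i}$ is $1$ if $i=j$ and $0$ otherwise. Near-vector space over $F$ (the scalar group $(F,\cdot,1,0,-1)$): an abelian group with a left action of $(F,\cdot)$ by endomorphisms, with $0,1,-1$ acting as $0,\mathrm{id},-\mathrm{id}$, the action free, and the quasi-kernel $Q(V)=\{u:\forall\alpha,\beta\in F\ \exists\gamma,\ \alpha u+\beta u=\gamma u\}$ generating $V$ additively. For $u\in Q(V)\setminus\{0\}$, $\alpha+_u\beta$ is the unique $\gamma$ with $\alpha u+\beta u=\gamma u$. *)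

(* Defs.v *)
From Stdlib Require Import List ClassicalDescription.
Import ListNotations.

Set Implicit Arguments.

Definition is_near_field (F : Type) (add mul : F -> F -> F) (zero one : F)
  (opp inv : F -> F) : Prop :=
  (forall a b c, mul a (mul b c) = mul (mul a b) c) /\
  (forall a, mul one a = a) /\ (forall a, mul a one = a) /\
  one <> zero /\
  (forall a b, a <> zero -> b <> zero -> mul a b <> zero) /\
  (forall a, a <> zero ->
     inv a <> zero /\ mul (inv a) a = one /\ mul a (inv a) = one) /\
  (forall a b c, add a (add b c) = add (add a b) c) /\
  (forall a b, add a b = add b a) /\
  (forall a, add zero a = a) /\
  (forall a, add (opp a) a = zero) /\
  (forall a b c, mul a (add b c) = add (mul a b) (mul a c)).

Definition is_mul_aut (F : Type) (mul : F -> F -> F) (one : F)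
  (tau tauinv : F -> F) : Prop :=
  (forall a, tauinv (tau a) = a) /\ (forall a, tau (tauinv a) = a) /\
  (forall a b, tau (mul a b) = mul (tau a) (tau b)) /\ tau one = one.

Definition tplus (F : Type) (add : F -> F -> F) (tau tauinv : F -> F)
  (a b : F) : F := tauinv (add (tau a) (tau b)).

Definition phi (F : Type) (mul : F -> F -> F) (inv : F -> F) (g a : F) : F :=
  mul (inv g) (mul a g).
Definition phiinv (F : Type) (mul : F -> F -> F) (inv : F -> F) (g a : F) : F :=
  mul g (mul a (inv g)).

Section NVS.
Variables (F : Type) (mul : F -> F -> F) (zero one : F) (opp : F -> F).
Variables (V : Type) (S : V -> Prop) (vadd : V -> V -> V) (act : F -> V -> V).

Definition quasi_kernel (u : V) : Prop :=
  S u /\ forall a b : F, exists c : F, vadd (act a u) (act b u) = act c u.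

(* S is additively generated by Q(V): every subgroup containing Q(V) is S *)
Definition generated_by_qk (z : V) : Prop :=
  forall T : V -> Prop,
    (forall u, T u -> S u) -> T z ->
    (forall u v, T u -> T v -> T (vadd u v)) ->
    (forall u v, T u -> S v -> vadd u v = z -> T v) ->
    (forall u, quasi_kernel u -> T u) ->
    forall v, S v -> T v.

Definition is_near_vector_space : Prop :=
  exists z : V, S z /\
  (forall u v, S u -> S v -> S (vadd u v)) /\
  (forall u v w, S u -> S v -> S w -> vadd u (vadd v w) = vadd (vadd u v) w) /\
  (forall u v, S u -> S v -> vadd u v = vadd v u) /\
  (forall u, S u -> vadd z u = u) /\
  (forall u, S u -> exists v, S v /\ vadd v u = z) /\
  (forall a u, S u -> S (act a u)) /\
  (forall a u v, S u -> S v -> act a (vadd u v) = vadd (act a u) (act a v)) /\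
  (forall a b u, S u -> act (mul a b) u = act a (act b u)) /\
  (forall u, S u -> act one u = u) /\
  (forall u, S u -> act zero u = z) /\
  (forall u, S u -> vadd (act (opp one) u) u = z) /\
  (forall a b u, S u -> act a u = act b u -> u = z \/ a = b) /\
  generated_by_qk z.

End NVS.

Definition fin_supp (I F : Type) (zero : F) (f : I -> F) : Prop :=
  exists l : list I, forall i, ~ In i l -> f i = zero.

Definition fam_add (I F : Type) (add : F -> F -> F) (sigma sigmainv : I -> F -> F)
  (f g : I -> F) : I -> F :=
  fun i => tplus add (sigma i) (sigmainv i) (f i) (g i).

Definition fam_act (I F : Type) (mul : F -> F -> F) (rho : I -> F -> F)
  (a : F) (f : I -> F) : I -> F :=
  fun i => mul (rho i a) (f i).

Definition unit_fam (I F : Type) (zero one : F) (j : I) : I -> F :=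
  fun i => if excluded_middle_informative (i = j) then one else zero.

(* Main.v *)
Require Import Defs.
From Stdlib Require Import List ClassicalDescription Classical FunctionalExtensionality.

Set Implicit Arguments.

Section NF.
Variables (F : Type) (add mul : F -> F -> F) (zero one : F) (opp inv : F -> F).
Hypothesis HF : is_near_field add mul zero one opp inv.

Lemma mulA : forall a b c, mul a (mul b c) = mul (mul a b) c.
Proof. destruct HF as (X&_). exact X. Qed.
Lemma mul1l : forall a, mul one a = a.
Proof. destruct HF as (_&X&_). exact X. Qed.
Lemma mul1r : forall a, mul a one = a.
Proof. destruct HF as (_&_&X&_). exact X. Qed.
Lemma mulnz : forall a b, a <> zero -> b <> zero -> mul a b <> zero.
Proof. destruct HF as (_&_&_&_&X&_). exact X. Qed.
Lemma invP : forall a, a <> zero ->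
     inv a <> zero /\ mul (inv a) a = one /\ mul a (inv a) = one.
Proof. destruct HF as (_&_&_&_&_&X&_). exact X. Qed.
Lemma addA : forall a b c, add a (add b c) = add (add a b) c.
Proof. destruct HF as (_&_&_&_&_&_&X&_). exact X. Qed.
Lemma addC : forall a b, add a b = add b a.
Proof. destruct HF as (_&_&_&_&_&_&_&X&_). exact X. Qed.
Lemma add0l : forall a, add zero a = a.
Proof. destruct HF as (_&_&_&_&_&_&_&_&X&_). exact X. Qed.
Lemma addNl : forall a, add (opp a) a = zero.
Proof. destruct HF as (_&_&_&_&_&_&_&_&_&X&_). exact X. Qed.
Lemma distr : forall a b c, mul a (add b c) = add (mul a b) (mul a c).
Proof. destruct HF as (_&_&_&_&_&_&_&_&_&_&X). exact X. Qed.

Lemma inv_ne0 a : a <> zero -> inv a <> zero.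
Proof. intro H; apply (invP H). Qed.
Lemma mulVl a : a <> zero -> mul (inv a) a = one.
Proof. intro H; apply (invP H). Qed.
Lemma mulVr a : a <> zero -> mul a (inv a) = one.
Proof. intro H; apply (invP H). Qed.

Lemma addNr a : add a (opp a) = zero.
Proof. rewrite addC; apply addNl. Qed.

Lemma add_rcancel x y z : add x y = add z y -> x = z.
Proof.
  intro H.
  transitivity (add (add x y) (opp y)).
  - rewrite <- addA, addNr, addC, add0l; reflexivity.
  - rewrite H, <- addA, addNr, addC, add0l; reflexivity.
Qed.

Lemma mul0r a : mul a zero = zero.
Proof.
  assert (E: mul a zero = add (mul a zero) (mul a zero))
    by (rewrite <- distr, add0l; reflexivity).
  symmetry. apply (@add_rcancel zero (mul a zero) (mul a zero)).
  rewrite add0l; exact E.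
Qed.

Lemma mul0l a : mul zero a = zero.
Proof.
  destruct (classic (a = zero)) as [->|Ha]; [apply mul0r|].
  destruct (classic (mul zero a = zero)) as [E|E]; auto. exfalso.
  apply (mulnz E (inv_ne0 Ha)).
  rewrite <- mulA, mulVr by exact Ha. apply mul1r.
Qed.

Lemma rcancel_mul a b c : b <> zero -> mul a b = mul c b -> a = c.
Proof.
  intros Hb H. rewrite <- (mul1r a), <- (mul1r c), <- (mulVr Hb), !mulA, H.
  reflexivity.
Qed.

Lemma mulVK a c : c <> zero -> mul (mul a (inv c)) c = a.
Proof. intro Hc. rewrite <- mulA, mulVl by exact Hc. apply mul1r. Qed.
Lemma mulKr a x : x <> zero -> mul (mul a x) (inv x) = a.
Proof. intro Hc. rewrite <- mulA, mulVr by exact Hc. apply mul1r. Qed.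

Lemma opp0 : opp zero = zero.
Proof.
  transitivity (add zero (opp zero)); [rewrite add0l; reflexivity|].
  rewrite addC; apply addNl.
Qed.

Lemma m1m1 : mul (opp one) (opp one) = one.
Proof.
  assert (H: mul (opp one) (add (opp one) one) = zero)
    by (rewrite addNl, mul0r; reflexivity).
  rewrite distr, mul1r in H.
  apply (@add_rcancel _ (opp one) _). rewrite H, addC, addNl. reflexivity.
Qed.

Lemma sq1 x : mul x x = one -> x = one \/ x = opp one.
Proof.
  intros H. destruct (classic (add x one = zero)) as [E|E].
  - right. apply (@add_rcancel x one (opp one)). rewrite E, addNl. reflexivity.
  - left. apply (rcancel_mul E). rewrite distr, H, mul1r, mul1l, addC. reflexivity.
Qed.

Lemma negm1 x : add (mul (opp one) x) x = zero.
Proof.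
  destruct (classic (x = zero)) as [->|Hx].
  { rewrite mul0r, add0l. reflexivity. }
  assert (Y: mul (mul (inv x) (mul (opp one) x)) (mul (inv x) (mul (opp one) x)) = one).
  { rewrite !mulA. rewrite (mulKr _ Hx).
    rewrite <- (mulA (inv x) (opp one) (opp one)), m1m1, mul1r. apply mulVl; exact Hx. }
  destruct (sq1 Y) as [Y1|Y1].
  - assert (E: mul (opp one) x = x).
    { apply (f_equal (mul x)) in Y1. rewrite mulA, mulVr, mul1l, mul1r in Y1 by exact Hx.
      exact Y1. }
    assert (Em1: opp one = one).
    { apply (rcancel_mul Hx). rewrite E, mul1l. reflexivity. }
    rewrite E.
    transitivity (mul x (add (opp one) one)).
    + rewrite distr, Em1, mul1r. reflexivity.
    + rewrite addNl, mul0r. reflexivity.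
  - assert (E: mul (opp one) x = mul x (opp one)).
    { apply (f_equal (mul x)) in Y1. rewrite mulA, mulVr, mul1l in Y1 by exact Hx.
      exact Y1. }
    rewrite E.
    transitivity (mul x (add (opp one) one)).
    + rewrite distr, mul1r. reflexivity.
    + rewrite addNl, mul0r. reflexivity.
Qed.

Section Aut.
Variables tau taui : F -> F.
Hypothesis Ht : is_mul_aut mul one tau taui.

Lemma tK a : taui (tau a) = a.
Proof. destruct Ht as (X&_). apply X. Qed.
Lemma Kt a : tau (taui a) = a.
Proof. destruct Ht as (_&X&_). apply X. Qed.
Lemma tM a b : tau (mul a b) = mul (tau a) (tau b).
Proof. destruct Ht as (_&_&X&_). apply X. Qed.
Lemma t1 : tau one = one.
Proof. destruct Ht as (_&_&_&X). apply X. Qed.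

Lemma tiM a b : taui (mul a b) = mul (taui a) (taui b).
Proof.
  rewrite <- (tK (mul (taui a) (taui b))), tM, !Kt. reflexivity.
Qed.
Lemma t0 : tau zero = zero.
Proof.
  transitivity (tau (mul zero (taui zero))).
  - rewrite mul0l; reflexivity.
  - rewrite tM, Kt, mul0r. reflexivity.
Qed.
Lemma ti0 : taui zero = zero.
Proof. transitivity (taui (tau zero)); [rewrite t0; reflexivity| apply tK]. Qed.
Lemma ti1 : taui one = one.
Proof. transitivity (taui (tau one)); [rewrite t1; reflexivity| apply tK]. Qed.

Lemma tm1 : tau (opp one) = opp one.
Proof.
  assert (H: mul (tau (opp one)) (tau (opp one)) = one)
    by (rewrite <- tM, m1m1, t1; reflexivity).
  destruct (sq1 H) as [E|E]; auto.
  assert (Em: opp one = one) by (rewrite <- (tK (opp one)), E, ti1; reflexivity).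
  rewrite E, Em. reflexivity.
Qed.

Lemma tp_comm a b : tplus add tau taui a b = tplus add tau taui b a.
Proof. unfold tplus. rewrite addC. reflexivity. Qed.
Lemma tp_assoc a b c :
  tplus add tau taui a (tplus add tau taui b c) = tplus add tau taui (tplus add tau taui a b) c.
Proof. unfold tplus. rewrite !Kt, addA. reflexivity. Qed.
Lemma tp_0l a : tplus add tau taui zero a = a.
Proof. unfold tplus. rewrite t0, add0l, tK. reflexivity. Qed.
Lemma tp_00 : tplus add tau taui zero zero = zero.
Proof. apply tp_0l. Qed.
Lemma tp_distr r x y :
  mul r (tplus add tau taui x y) = tplus add tau taui (mul r x) (mul r y).
Proof. unfold tplus. rewrite !tM, <- distr, tiM, tK. reflexivity. Qed.
Lemma tp_inv x : tplus add tau taui (taui (opp (tau x))) x = zero.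
Proof. unfold tplus. rewrite Kt, addNl, ti0. reflexivity. Qed.
Lemma tp_pull r p q : mul r (taui (add p q)) = taui (add (mul (tau r) p) (mul (tau r) q)).
Proof. rewrite <- distr, tiM, tK. reflexivity. Qed.

End Aut.

Section Fam.
Variables (Idx : Type) (sigma sigmainv rho rhoinv : Idx -> F -> F).
Hypothesis Hs : forall i, is_mul_aut mul one (sigma i) (sigmainv i).
Hypothesis Hr : forall i, is_mul_aut mul one (rho i) (rhoinv i).

Definition single (j : Idx) (c : F) : Idx -> F :=
  fun i => if excluded_middle_informative (i = j) then c else zero.

Lemma qk_single j c :
  quasi_kernel (fin_supp zero) (fam_add add sigma sigmainv) (fam_act mul rho) (single j c).
Proof.
  split.
  { exists (j :: nil). intros i Hi. unfold single.
    destruct (excluded_middle_informative (i = j)); [subst; exfalso; apply Hi; left; reflexivity | reflexivity]. }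
  intros a b. destruct (classic (c = zero)) as [->|Hc].
  - exists zero. extensionality i. unfold fam_add, fam_act, single.
    destruct (excluded_middle_informative (i = j)); rewrite !mul0r; apply (tp_00 (Hs i)).
  - exists (rhoinv j (mul (tplus add (sigma j) (sigmainv j) (mul (rho j a) c) (mul (rho j b) c)) (inv c))).
    extensionality i. unfold fam_add, fam_act, single.
    destruct (excluded_middle_informative (i = j)) as [->|n].
    + rewrite (Kt (Hr j)). rewrite mulVK by exact Hc. reflexivity.
    + rewrite !mul0r. apply (tp_00 (Hs i)).
Qed.

Lemma main_sec :
  is_near_vector_space mul zero one opp (fin_supp zero)
    (fam_add add sigma sigmainv) (fam_act mul rho) /\
  forall (j : Idx) (g : F), g <> zero ->
    let w := fam_act mul rho g (unit_fam zero one j) in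
    quasi_kernel (fin_supp zero) (fam_add add sigma sigmainv) (fam_act mul rho) w /\
    forall a b : F,
      fam_add add sigma sigmainv (fam_act mul rho a w) (fam_act mul rho b w)
      = fam_act mul rho
          (tplus add (fun x => sigma j (rho j (phi mul inv g x)))
                     (fun x => phiinv mul inv g (rhoinv j (sigmainv j x))) a b) w.
Proof.
  split.
  - exists (fun _ => zero).
    split. { exists nil. intros; reflexivity. }
    split.
    { intros u v [l1 H1] [l2 H2]. exists (l1 ++ l2). intros i Hi. unfold fam_add.
      rewrite H1, H2. apply (tp_00 (Hs i)).
      - intro; apply Hi; apply in_or_app; right; auto.
      - intro; apply Hi; apply in_or_app; left; auto. }
    split. { intros u v w _ _ _. extensionality i. unfold fam_add. apply (tp_assoc (Hs i)). }
    split. { intros u v _ _. extensionality i. unfold fam_add. apply tp_comm. }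
    split. { intros u _. extensionality i. unfold fam_add. apply (tp_0l (Hs i)). }
    split.
    { intros u [l Hl]. exists (fun i => sigmainv i (opp (sigma i (u i)))). split.
      - exists l. intros i Hi. rewrite Hl by auto. rewrite (t0 (Hs i)), opp0, (ti0 (Hs i)). reflexivity.
      - extensionality i. unfold fam_add. apply (tp_inv (Hs i)). }
    split.
    { intros a u [l Hl]. exists l. intros i Hi. unfold fam_act. rewrite Hl by auto. apply mul0r. }
    split.
    { intros a u v _ _. extensionality i. unfold fam_act, fam_add. apply (tp_distr (Hs i)). }
    split.
    { intros a b u _. extensionality i. unfold fam_act. rewrite (tM (Hr i)). symmetry. apply mulA. }
    split.
    { intros u _. extensionality i. unfold fam_act. rewrite (t1 (Hr i)). apply mul1l. }
    split.
    { intros u _. extensionality i. unfold fam_act. rewrite (t0 (Hr i)). apply mul0l. }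
    split.
    { intros u _. extensionality i. unfold fam_add, fam_act, tplus.
      rewrite (tM (Hs i)), (tm1 (Hr i)), (tm1 (Hs i)), negm1, (ti0 (Hs i)). reflexivity. }
    split.
    { intros a b u _ E.
      destruct (classic (exists i, u i <> zero)) as [[i Hi]|Hne].
      - right. assert (Ei := f_equal (fun f => f i) E). unfold fam_act in Ei. simpl in Ei.
        apply (rcancel_mul Hi) in Ei.
        rewrite <- (tK (Hr i) a), <- (tK (Hr i) b), Ei. reflexivity.
      - left. extensionality i. destruct (classic (u i = zero)) as [H|H]; auto.
        exfalso; apply Hne; eauto. }
    { intros T HTS HTz HTadd _ HTq v [l Hl]. revert v Hl.
      induction l as [|j l IH]; intros v Hl.
      - replace v with (fun _ : Idx => zero). exact HTz.
        extensionality i. symmetry. apply Hl. intros [].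
      - assert (Ev: v = fam_add add sigma sigmainv (single j (v j))
                   (fun i => if excluded_middle_informative (i = j) then zero else v i)).
        { extensionality i. unfold fam_add, single.
          destruct (excluded_middle_informative (i = j)) as [->|n].
          - rewrite tp_comm, (tp_0l (Hs j)). reflexivity.
          - rewrite (tp_0l (Hs i)). reflexivity. }
        rewrite Ev. apply HTadd.
        + apply HTq, qk_single.
        + apply IH. intros i Hi. destruct (excluded_middle_informative (i = j)) as [|n]; auto.
          apply Hl. intros [H|H]; auto. }
  - intros j g Hg w.
    assert (Ew: w = single j (rho j g)).
    { unfold w. extensionality i. unfold fam_act, unit_fam, single.
      destruct (excluded_middle_informative (i = j)) as [->|n]; [apply mul1r | apply mul0r]. }
    split. { rewrite Ew; apply qk_single. }
    intros a b. rewrite Ew. extensionality i. unfold fam_add, fam_act, single.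
    destruct (excluded_middle_informative (i = j)) as [->|n].
    + assert (HVg: mul (rho j (inv g)) (rho j g) = one)
        by (rewrite <- (tM (Hr j)), (mulVl Hg), (t1 (Hr j)); reflexivity).
      assert (HgV: mul (rho j g) (rho j (inv g)) = one)
        by (rewrite <- (tM (Hr j)), (mulVr Hg), (t1 (Hr j)); reflexivity).
      unfold tplus, phi, phiinv.
      rewrite !(tM (Hr j)), (Kt (Hr j)).
      rewrite <- !mulA, HVg, mul1r.
      rewrite (tp_pull (Hs j)).
      rewrite <- !(tM (Hs j)).
      rewrite !mulA, HgV, !mul1l. reflexivity.
    + rewrite !mul0r. apply (tp_00 (Hs i)).
Qed.

End Fam.
End NF.

Theorem mainTheorem6 (F : Type) (add mul : F -> F -> F) (zero one : F)
  (opp inv : F -> F) (HF : is_near_field add mul zero one opp inv)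
  (I : Type) (sigma sigmainv rho rhoinv : I -> F -> F)
  (Hsigma : forall i, is_mul_aut mul one (sigma i) (sigmainv i))
  (Hrho : forall i, is_mul_aut mul one (rho i) (rhoinv i)) :
  is_near_vector_space mul zero one opp (fin_supp zero)
    (fam_add add sigma sigmainv) (fam_act mul rho) /\
  forall (j : I) (g : F), g <> zero ->
    let w := fam_act mul rho g (unit_fam zero one j) in
    quasi_kernel (fin_supp zero) (fam_add add sigma sigmainv) (fam_act mul rho) w /\
    forall a b : F,
      fam_add add sigma sigmainv (fam_act mul rho a w) (fam_act mul rho b w)
      = fam_act mul rho
          (tplus add (fun x => sigma j (rho j (phi mul inv g x)))
                     (fun x => phiinv mul inv g (rhoinv j (sigmainv j x))) a b) w.
Proof.
  eapply main_sec; eassumption.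
Qed.
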